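(* Let $\phi$ be an escort and let $V$ be a $C^1$ function on an open neighbourhood of the interior $\Delta^n_\circ=\{x\in\mathbb{R}^n: x_i>0,\ \sum_ix_i=1\}$ of the simplex, with Euclidean gradient $f=\nabla V$. Let $x(t)$ be a solution in $\Delta^n_\circ$ of the escort replicator equation \[\dot x_i=\phi(x_i)\left(f_i(x)-\mathbb{E}^{\phi}_{x}[f(x)]\right),\qquad i=1,\dots,n.\] Then along the solution \[\frac{d}{dt}V(x)=Z_\phi(x)\,\mathrm{Var}^{\phi}_{x}[f(x)].\]
   Context: An escort is a continuous function $\phi$ that is strictly positive on $(0,1]$. For $x=(x_1,\dots,x_n)$: the partition function is $Z_\phi(x)=\sum_{i=1}^n\phi(x_i)$; for a vector $g\in\mathbb{R}^n$ the escort expectation is $\mathbb{E}^{\phi}_{x}[g]=\frac{1}{Z_\phi(x)}\sum_{i=1}^n\phi(x_i)g_i$; and the escort variance is $\mathrm{Var}^{\phi}_{x}[g]=\mathbb{E}^{\phi}_{x}\big[(g-\mathbb{E}^{\phi}_{x}[g])^2\big]=\frac{1}{Z_\phi(x)}\sum_{i}\phi(x_i)\big(g_i-\mathbb{E}^{\phi}_{x}[g]\big)^2$. *)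

(* Defs.v *)
From HB Require Import structures.
From mathcomp Require Import all_boot all_order all_algebra.
From mathcomp Require Import all_classical all_reals all_analysis.
Set Implicit Arguments. Unset Strict Implicit. Unset Printing Implicit Defensive.
Import Order.TTheory GRing.Theory Num.Theory.
Import numFieldNormedType.Exports.
Local Open Scope ring_scope.
Local Open Scope classical_set_scope.

Definition escort (R : realType) (phi : R -> R) : Prop :=
  {within `[0, 1], continuous phi} /\ (forall u : R, 0 < u <= 1 -> 0 < phi u).

Definition simplex_int (R : realType) (n : nat) : set 'rV[R]_n :=
  [set x | (forall i : 'I_n, 0 < x ord0 i) /\ \sum_(i < n) x ord0 i = 1].

Definition Zphi (R : realType) (n : nat) (phi : R -> R) (x : 'rV[R]_n) : R :=
  \sum_(i < n) phi (x ord0 i).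

Definition escE (R : realType) (n : nat) (phi : R -> R) (x g : 'rV[R]_n) : R :=
  (Zphi phi x)^-1 * \sum_(i < n) phi (x ord0 i) * g ord0 i.

Definition escVar (R : realType) (n : nat) (phi : R -> R) (x g : 'rV[R]_n) : R :=
  (Zphi phi x)^-1 * \sum_(i < n) phi (x ord0 i) * (g ord0 i - escE phi x g) ^+ 2.

Definition evec (R : realType) (n : nat) (i : 'I_n) : 'rV[R]_n := delta_mx ord0 i.

(* Main.v *)
Require Import Defs.
From HB Require Import structures.
From mathcomp Require Import all_boot all_order all_algebra.
From mathcomp Require Import all_classical all_reals all_analysis.
From mathcomp Require Import ring.
Import Order.TTheory GRing.Theory Num.Theory.
Import numFieldNormedType.Exports.
Local Open Scope ring_scope.
Local Open Scope classical_set_scope.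

Theorem mainTheorem2 (R : realType) (n : nat) (phi : R -> R)
  (U : set 'rV[R]_n) (V : 'rV[R]_n -> R) (f : 'rV[R]_n -> 'rV[R]_n)
  (a b : R) (x : R -> 'rV[R]_n) :
  escort phi ->
  open U -> @simplex_int R n `<=` U ->
  (* V is C^1 on U with Euclidean gradient f *)
  (forall y, U y -> differentiable V y) ->
  {in U, continuous f} ->
  (forall y (i : 'I_n), U y -> 'D_(@evec R n i) V y = f y ord0 i) ->
  (* x is a solution in the open simplex of the escort replicator equation on ]a,b[ *)
  (forall t, t \in `]a, b[ -> @simplex_int R n (x t)) ->
  (forall t, t \in `]a, b[ ->
     is_derive t 1 x (\row_(i < n) (phi (x t ord0 i) *
                        (f (x t) ord0 i - escE phi (x t) (f (x t)))))) ->
  forall t, t \in `]a, b[ ->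
    is_derive t 1 (V \o x) (Zphi phi (x t) * escVar phi (x t) (f (x t))).
Proof.
move=> [_ phipos] _ sU dV _ hf hx hd t tab.
have [xpos xsum] := hx t tab.
have dxe := hd t tab.
set y := x t in dxe *.
set dx := \row_(i < n) _ in dxe.
have der : derivable x t 1 by case: dxe.
have Dx : 'D_1 x t = dx by exact: derive_val.
have difx : differentiable x t by apply/derivable1_diffP.
have Uy : U y by exact: sU.
have difV := dV _ Uy.
have difc : differentiable (V \o x) t by exact: differentiable_comp.
apply: DeriveDef; first exact: diff_derivable.
rewrite deriveE // diff_comp // /= -/y -(deriveE (1:R) difx) Dx.
rewrite [dx in 'd V y dx]row_sum_delta linear_sum /=.
under eq_bigr => i _ do rewrite linearZ /= -(deriveE _ difV) hf // !mxE.
have y1 : forall i, 0 < y ord0 i <= 1.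
  move=> i; rewrite xpos /= -xsum (bigD1 i) //= lerDl.
  by apply: sumr_ge0 => j _; exact/ltW.
have Zpos : 0 < Zphi phi y.
  case: (posnP n) => [n0|n0].
    move: xsum; subst n; by rewrite big_ord0 => /eqP; rewrite eq_sym oner_eq0.
  rewrite /Zphi (bigD1 (Ordinal n0)) //=.
  apply: ltr_pwDl; first exact: phipos.
  by apply: sumr_ge0 => i _; apply/ltW/phipos.
have Z0 : Zphi phi y != 0 by rewrite gt_eqF.
set E := escE phi y (f y).
have S0 : \sum_(i < n) phi (y ord0 i) * (f y ord0 i - E) = 0.
  under eq_bigr => i _ do rewrite mulrBr.
  rewrite sumrB -mulr_suml /E /escE -/(Zphi phi y).
  by rewrite mulVKf // subrr.
rewrite /escVar -/E mulVKf //.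
have -> : \sum_(i < n) phi (y ord0 i) * (f y ord0 i - E) ^+ 2 =
  \sum_(i < n) phi (y ord0 i) * (f y ord0 i - E) * f y ord0 i
  - E * \sum_(i < n) phi (y ord0 i) * (f y ord0 i - E).
  rewrite mulr_sumr -sumrB; apply: eq_bigr => i _; rewrite /GRing.scale /=.
  generalize (phi (y ord0 i)) (f y ord0 i) E => p u e; ring.
rewrite S0 mulr0 subr0; apply: eq_bigr => i _; by [].
Qed.
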